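(* Let $K$ be a simplicial complex and $G$ be an Abelian group. The reduced $L$-spectral sequence of $K$ over $G$ satisfies $\widetilde L_{s,s+t+1}(K;G)=\oplus_{|\sigma|=s}\, \widetilde H^{t}({\rm link}_K\sigma;G)$ and $(\widetilde L_{*,*}(K;G),\partial_1)=(\oplus_{\sigma\in K}\,\widetilde H^{*}({\rm link}_K\sigma;G),\partial_1)$, where $\partial_1$ on the right side is defined as follows. Denote $x\in\widetilde H^*({\rm link}_K\sigma;G)$ by $[x]_{\sigma}$ in $\oplus_{\sigma\in K}\,\widetilde H^{*}({\rm link}_K\sigma;G)$. Then $\partial_1([x]_{\sigma})=\sum_{i=0}^n[\psi_{\sigma}^{\sigma_i}(x)]_{\sigma_i}$, where $\sigma=\{v_0,\cdots,v_n\}$, $\sigma_i=\sigma-\{v_i\}$, and $\psi_{\sigma}^{\sigma_i}=(\widetilde\psi_{\sigma}^{\sigma_i})^*$ is the cohomology homomorphism induced by the cochain map $\widetilde\psi^{\sigma_i}_{\sigma}\colon\widetilde C_*({\rm link}_K\sigma;G)\to\widetilde C_{*+1}({\rm link}_K\sigma_i;G)$, $\widetilde\psi_{\sigma}^{\sigma_i}(\tau)=\tau\cup[v_i]$ for all chain simplexes $\tau\in{\rm link}_K\sigma$. The (unreduced) $L$-spectral sequence of $K$ over $G$ satisfies $L_{s,s+t+1}(K;G)=\oplus_{|\sigma|=s}\, \widetilde H^{t}({\rm link}_K\sigma;G)$ and $(L_{*,*}(K;G),\partial_1)=(\oplus_{\sigma\in K,\sigma\neq\phi}\,\widetilde H^{*}({\rm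 link}_K\sigma;G),\partial_1)$, where for $x\in\widetilde H^*({\rm link}_{K}\sigma;G)$, $\partial_1([x]_{\sigma})=\sum_{i=0}^n[\psi_{\sigma}^{\sigma_i}(x)]_{\sigma_i}$ (with $\psi_{\sigma}^{\sigma_i}$ as in the reduced case) if $|\sigma|>0$, and $\partial_1([x]_{\sigma})=0$ if $|\sigma|=0$. For any $n\geqslant 0$ there is an exact sequence \[0\to L\widetilde H_{0,n}(K;G)\to LH_{0,n}(K;G)\to\widetilde H^n(K;G)\to L\widetilde H_{-1,n}(K;G)\to 0,\] and $LH_{s,n}(K;G)=L\widetilde H_{s,n}(K;G)$ if $s>0$.
   Context: $K$ is a finite abstract simplicial complex with vertex set $S$; ${\rm link}_K\sigma=\{\tau\in K\mid\sigma\cup\tau\in K,\ \sigma\cap\tau=\phi\}$. $C_k(K)$ is the Abelian group generated by ordered sequences (chain simplexes) $[v_0,\cdots,v_k]$ of vertices, modulo: it is $0$ if a vertex repeats or $\{v_0,\dots,v_k\}\notin K$, and swapping two entries changes sign; $C_{-1}(K)$ is generated by $[\,]$. $C_*(K)=\oplus_{k\geqslant0}C_k(K)$, $\widetilde C_*(K)=\oplus_{k\geqslant -1}C_k(K)$. Differentials: $d[v_0,\cdots,v_k]=\sum_i(-1)^i[v_0,\cdots,\hat v_i,\cdots,v_k]$ ($d[v_0]=[\,]$) and $\delta[v_0,\cdots,v_k]=\sum_{v\in S}[v,v_0,\cdots,v_k]$ ($\delta[\,]=\sum_{v\in S}[v]$). $\widetilde H^*(K;G)=H^*(\widetilde C_*(K)\otimes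 G,\delta)$. For chain simplexes with disjoint vertex sets, $\sigma\cup\tau$ denotes concatenation of the sequences. The double complex $T_{*,*}(K)$ (resp. $\widetilde T_{*,*}(K)$) is the double subcomplex of $(C_*(K),d)\otimes(C_*(K),\delta)$ (resp. $(\widetilde C_*(K),d)\otimes(\widetilde C_*(K),\delta)$) generated by $\sigma\otimes\tau$ with $\sigma\subset\tau$, $T_{s,t}$ spanned by such with $|\sigma|=s$, $|\tau|=t$, and $\partial(\sigma\otimes\tau)=(d\sigma)\otimes\tau+(-1)^{|\sigma|}\sigma\otimes(\delta\tau)$; with coefficients, tensor with $G$. The (reduced) $L$-spectral sequence $\{L^r_{s,t}\}$ (resp. $\{\widetilde L^r_{s,t}\}$) is induced by the horizontal filtration $\oplus_{s\leqslant n}T_{s,*}$ (resp. $\oplus_{s\leqslant n}\widetilde T_{s,*}$), with $\partial_r\colon L^r_{s,t}\to L^r_{s-r,t-r+1}$; $L_{*,*}=L^1_{*,*}$, $\widetilde L_{*,*}=\widetilde L^1_{*,*}$, and the $L$-homology is $LH_{s,t}=L^2_{s,t}$, reduced $L$-homology $L\widetilde H_{s,t}=\widetilde L^2_{s,t}$. *)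

(* Defs.v *)
From HB Require Import structures.
From mathcomp Require Import all_boot all_order all_algebra.
Set Implicit Arguments. Unset Strict Implicit. Unset Printing Implicit Defensive.
Import GRing.Theory.
Local Open Scope ring_scope.

Section LSpectral.
Variable S : finType.
Variable G : zmodType.

Definition simplicial_complex (K : {set {set S}}) : Prop :=
  set0 \in K /\ (forall v : S, [set v] \in K) /\
  (forall sigma tau : {set S}, sigma \in K -> tau \subset sigma -> tau \in K).

Definition link (K : {set {set S}}) (sigma : {set S}) : {set {set S}} :=
  [set tau | (sigma :|: tau \in K) && [disjoint sigma & tau]].

(* dimension of a simplex: |sigma| in the paper (so |[]| = -1) *)
Definition dim (sigma : {set S}) : int := (#|sigma|%:Z - 1)%R.

(* A chain simplex is identified, via the fixed total order of the finite
   type S (enum_rank), with +/- the increasingly ordered sequence. *)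
Definition vlt (u v : S) : bool := (enum_rank u < enum_rank v)%N.
Definition count_lt (v : S) (A : {set S}) : nat := #|[set u in A | vlt u v]|.
Definition count_gt (v : S) (A : {set S}) : nat := #|[set u in A | vlt v u]|.
Definition sgnz (n : nat) (x : G) : G := if odd n then - x else x.

(* an element of C~_n(L) (x) G: coefficient of each increasingly ordered simplex *)
Definition supp1 (L : {set {set S}}) (n : int) (f : {ffun {set S} -> G}) : Prop :=
  forall rho, f rho != 0 -> (rho \in L) && (dim rho == n).

(* delta [v_0..v_k] = sum_v [v, v_0, .., v_k], in coefficients *)
Definition cobd (L : {set {set S}}) (f : {ffun {set S} -> G}) : {ffun {set S} -> G} :=
  [ffun rho : {set S} => if rho \in L then \sum_(v in rho) sgnz (count_lt v rho) (f (rho :\ v))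
               else 0].

(* H~^n(L;G) = H(C~_*(L) (x) G, delta) at degree n, as a subquotient:
   cycles HZ, boundaries HB *)
Definition HZ (L : {set {set S}}) (n : int) (f : {ffun {set S} -> G}) : Prop :=
  supp1 L n f /\ cobd L f = 0.
Definition HB (L : {set {set S}}) (n : int) (f : {ffun {set S} -> G}) : Prop :=
  exists g, supp1 L (n - 1) g /\ f = cobd L g.

Local Notation V2 := {ffun {set S} * {set S} -> G}.

(* sigma (x) tau is a generator of T~ (any sigma), of T (sigma nonempty) *)
Definition adm (red : bool) (sigma : {set S}) : bool := red || (sigma != set0).

Definition Tsupp (red : bool) (K : {set {set S}}) (s t : int) (x : V2) : Prop :=
  forall p : {set S} * {set S}, x p != 0 ->
    [&& adm red p.1, p.1 \subset p.2, p.2 \in K, dim p.1 == s & dim p.2 == t].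

(* vertical part of the differential: sigma (x) tau |-> (-1)^|sigma| sigma (x) delta tau *)
Definition vert (red : bool) (K : {set {set S}}) (x : V2) : V2 :=
  [ffun p : {set S} * {set S} => if [&& adm red p.1, p.1 \subset p.2 & p.2 \in K] then
     sgnz (#|p.1|.+1)
       (\sum_(v in p.2 :\: p.1) sgnz (count_lt v p.2) (x (p.1, p.2 :\ v)))
   else 0].

(* horizontal part of the differential: sigma (x) tau |-> (d sigma) (x) tau *)
Definition horiz (red : bool) (K : {set {set S}}) (x : V2) : V2 :=
  [ffun p : {set S} * {set S} => if [&& adm red p.1, p.1 \subset p.2 & p.2 \in K] then
     \sum_(v in p.2 :\: p.1) sgnz (count_lt v p.1) (x (v |: p.1, p.2))
   else 0].

(* first page L^1_{s,t} = H(T_{s,*}, vertical part) (E^1 of the horizontal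
   filtration), as a subquotient of V2 *)
Definition L1Z red K s t (x : V2) : Prop := Tsupp red K s t x /\ vert red K x = 0.
Definition L1B red K s t (x : V2) : Prop :=
  exists y, Tsupp red K s (t - 1) y /\ x = vert red K y.

(* second page L^2_{s,t} = H(L^1, partial_1), partial_1 : L^1_{s,t} -> L^1_{s-1,t}
   being induced by the horizontal part *)
Definition L2Z red K s t (x : V2) : Prop :=
  L1Z red K s t x /\ L1B red K (s - 1) t (horiz red K x).
Definition L2B red K s t (x : V2) : Prop :=
  exists y z, L1Z red K (s + 1) t y /\ L1B red K s t z /\ x = horiz red K y + z.

(* element of (+)_{sigma in K, dim sigma = s (, sigma <> empty if not red)}
   C~_t(link sigma) (x) G *)
Definition Asupp (red : bool) (K : {set {set S}}) (s t : int) (x : V2) : Prop :=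
  forall p : {set S} * {set S}, x p != 0 ->
    [&& adm red p.1, p.1 \in K, dim p.1 == s, p.2 \in link K p.1 & dim p.2 == t].

Definition slice (x : V2) (sigma : {set S}) : {ffun {set S} -> G} :=
  [ffun rho : {set S} => x (sigma, rho)].

Definition AZ red K s t (x : V2) : Prop :=
  Asupp red K s t x /\ forall sigma, HZ (link K sigma) t (slice x sigma).
Definition AB red K s t (x : V2) : Prop :=
  Asupp red K s t x /\ forall sigma, HB (link K sigma) t (slice x sigma).

(* psi~^{sigma - v}_{sigma} : tau |-> tau \cup [v] (v appended at the end) *)
Definition psi (v : S) (g : {ffun {set S} -> G}) : {ffun {set S} -> G} :=
  [ffun rho : {set S} => if v \in rho then sgnz (count_gt v (rho :\ v)) (g (rho :\ v)) else 0].

(* partial_1 [x]_sigma = sum_i [psi(x)]_{sigma_i}; zero when the target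
   sigma_i = empty is not allowed (unreduced case, |sigma| = 0) *)
Definition dA (red : bool) (x : V2) : V2 :=
  [ffun p : {set S} * {set S} => if adm red p.1 then
     \sum_(v | v \notin p.1) psi v (slice x (v |: p.1)) p.2
   else 0].

End LSpectral.

(* A subquotient is given by a pair (Z, B) of predicates (subgroups, B <= Z) on
   a zmodType; a homomorphism Z1/B1 -> Z2/B2 is represented by a function on
   representatives which is additive modulo B2 and maps B1 into B2. *)
Section Subquot.
Variables V W U : zmodType.

Definition sq_hom (Z1 B1 : V -> Prop) (Z2 B2 : W -> Prop) (f : V -> W) : Prop :=
  [/\ forall x, Z1 x -> Z2 (f x),
      forall x y, Z1 x -> Z1 y -> B2 (f (x + y) - f x - f y)
    & forall x, B1 x -> B2 (f x)].
End Subquot.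

Section Subquot2.
Variables V W U : zmodType.

Definition sq_iso (Z1 B1 : V -> Prop) (Z2 B2 : W -> Prop) (f : V -> W) (g : W -> V)
  : Prop :=
  [/\ sq_hom Z1 B1 Z2 B2 f, sq_hom Z2 B2 Z1 B1 g,
      forall x, Z1 x -> B1 (g (f x) - x)
    & forall y, Z2 y -> B2 (f (g y) - y)].

Definition sq_inj (Z1 B1 : V -> Prop) (B2 : W -> Prop) (f : V -> W) : Prop :=
  forall x, Z1 x -> B2 (f x) -> B1 x.

Definition sq_surj (Z1 : V -> Prop) (Z2 B2 : W -> Prop) (f : V -> W) : Prop :=
  forall y, Z2 y -> exists x, Z1 x /\ B2 (f x - y).

Definition sq_exact (Z1 : V -> Prop) (Z2 B2 : W -> Prop) (B3 : U -> Prop)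
  (f : V -> W) (g : W -> U) : Prop :=
  (forall x, Z1 x -> B3 (g (f x))) /\
  (forall y, Z2 y -> B3 (g y) -> exists x, Z1 x /\ B2 (f x - y)).
End Subquot2.

(* Main.v *)
Require Import Defs.
From HB Require Import structures.
From mathcomp Require Import all_boot all_order all_algebra.
From mathcomp Require Import zify.
From Stdlib Require Import IndefiniteDescription.
Set Implicit Arguments. Unset Strict Implicit. Unset Printing Implicit Defensive.
Import Order.TTheory GRing.Theory Num.Theory.
Local Open Scope ring_scope.

Section Aux.
Variable S : finType.
Variable G : zmodType.
Local Notation V2 := {ffun {set S} * {set S} -> G}.
Local Notation V1 := {ffun {set S} -> G}.

Lemma sgnzD m n (x : G) : sgnz (m + n) x = sgnz m (sgnz n x).
Proof. by rewrite /sgnz oddD; case: (odd m); case: (odd n); rewrite /= ?opprK. Qed.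

Lemma sgnz_odd m n (x : G) : odd m = odd n -> sgnz m x = sgnz n x.
Proof. by rewrite /sgnz => ->. Qed.

Lemma sgnzK n (x : G) : sgnz n (sgnz n x) = x.
Proof. by rewrite /sgnz; case: (odd n); rewrite ?opprK. Qed.

Lemma sgnz0 n : sgnz n (0 : G) = 0.
Proof. by rewrite /sgnz; case: (odd n); rewrite ?oppr0. Qed.

Lemma sgnzDr n (x y : G) : sgnz n (x + y) = sgnz n x + sgnz n y.
Proof. by rewrite /sgnz; case: (odd n); rewrite ?opprD. Qed.

Lemma sgnzN n (x : G) : sgnz n (- x) = - sgnz n x.
Proof. by rewrite /sgnz; case: (odd n). Qed.

Lemma sgnz1 n (x : G) : sgnz n.+1 x = - sgnz n x.
Proof. by rewrite /sgnz /=; case: (odd n); rewrite ?opprK. Qed.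

Lemma sgnz_sum n (I : finType) (P : pred I) (F : I -> G) :
  sgnz n (\sum_(i | P i) F i) = \sum_(i | P i) sgnz n (F i).
Proof. by rewrite /sgnz; case: (odd n); rewrite ?sumrN. Qed.

Lemma sgnz_neq0 n (x : G) : sgnz n x != 0 -> x != 0.
Proof. by apply: contraNneq => ->; rewrite sgnz0. Qed.

Lemma sum_neq0 (I : finType) (P : pred I) (F : I -> G) :
  \sum_(i | P i) F i != 0 -> exists i, P i && (F i != 0).
Proof.
case: (boolP [exists i, P i && (F i != 0)]) => [/existsP //|/existsPn H].
move=> /negP []; apply/eqP/big1 => i Pi.
by move: (H i); rewrite Pi /= negbK => /eqP.
Qed.

Lemma subDD (V : zmodType) (a b : V) : a + b - a - b = 0.
Proof. by rewrite -addrA -opprD subrr. Qed.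

Lemma vlt_irr (v : S) : vlt v v = false.
Proof. by rewrite /vlt ltnn. Qed.

Lemma vlt_total (v w : S) : v != w -> vlt v w || vlt w v.
Proof.
move=> vw; rewrite /vlt -neq_ltn; apply: contra vw => /eqP h.
by apply/eqP; apply: enum_rank_inj; apply: val_inj.
Qed.

Lemma vlt_asym (v w : S) : vlt v w -> ~~ vlt w v.
Proof. by rewrite /vlt => h; rewrite -leqNgt ltnW. Qed.

Lemma count_lt_U (v : S) (A B : {set S}) : [disjoint A & B] ->
  count_lt v (A :|: B) = (count_lt v A + count_lt v B)%N.
Proof.
move=> dAB; rewrite /count_lt.
have -> : [set u in A :|: B | vlt u v] = [set u in A | vlt u v] :|: [set u in B | vlt u v].
  by apply/setP => u; rewrite !inE andb_orl.
rewrite cardsU; suff -> : [set u in A | vlt u v] :&: [set u in B | vlt u v] = set0.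
  by rewrite cards0 subn0.
apply/setP => u; rewrite !inE; case: (boolP (u \in A)) => //= uA.
by rewrite (disjointFr dAB uA) /= andbF.
Qed.

Lemma count_lt_gt (v : S) (A : {set S}) : v \notin A ->
  (count_lt v A + count_gt v A)%N = #|A|.
Proof.
move=> vA; rewrite /count_lt /count_gt.
rewrite -(cardsID [set u | vlt u v] A).
congr (_ + _)%N; first by apply: eq_card => u; rewrite !inE andbC.
apply: eq_card => u; rewrite !inE andbC; have [uA|uA] := boolP (u \in A); last by rewrite !andbF.
rewrite !andbT.
have uv : u != v by apply: contraNneq vA => <-.
by case/orP: (vlt_total uv) => h; rewrite h ?(negbTE (vlt_asym h)).
Qed.

Lemma sum_bool (A : {set S}) (P : pred S) : (\sum_(u in A) (P u : nat))%N = #|[set u in A | P u]|.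
Proof.
rewrite -sum1_card big_mkcond [RHS]big_mkcond; apply: eq_bigr => u _ /=.
by rewrite !inE; case: (u \in A); case: (P u).
Qed.

Lemma count_lt_set1 (u v : S) : count_lt u [set v] = vlt v u.
Proof. by rewrite /count_lt -sum_bool big_set1. Qed.

Lemma count_lt_1 (u v : S) (A : {set S}) : v \notin A ->
  count_lt u (v |: A) = (count_lt u A + vlt v u)%N.
Proof.
move=> vA; rewrite setUC count_lt_U; last by rewrite disjoint_sym disjoints1.
by rewrite count_lt_set1.
Qed.

Lemma count_lt_self (v : S) (A : {set S}) : count_lt v (v |: A) = count_lt v A.
Proof.
have [vA|vA] := boolP (v \in A); first by rewrite (setUidPr _) // sub1set.
by rewrite /count_lt -!sum_bool big_setU1 ?vlt_irr.
Qed.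

Lemma count_lt0 (v : S) : count_lt v (set0 : {set S}) = 0%N.
Proof. by rewrite /count_lt -sum_bool big_set0. Qed.

Definition inv (A B : {set S}) : nat := (\sum_(u in A) count_lt u B)%N.

Lemma inv_r (v : S) (A B : {set S}) : v \notin B -> inv A (v |: B) = (inv A B + count_gt v A)%N.
Proof.
move=> vB; rewrite /inv (eq_bigr (fun u => count_lt u B + vlt v u)%N); last by move=> u _; rewrite count_lt_1.
by rewrite big_split /= sum_bool.
Qed.

Lemma inv_l (v : S) (A B : {set S}) : v \notin A -> inv (v |: A) B = (count_lt v B + inv A B)%N.
Proof. by move=> vA; rewrite /inv big_setU1. Qed.

End Aux.

Ltac par := rewrite ?(oddD, oddM, oddS) /=;
  repeat match goal with |- context [odd ?n] => case: (odd n) end; by [].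

Section Part1.
Variable S : finType.
Variable G : zmodType.
Local Notation V2 := {ffun {set S} * {set S} -> G}.
Local Notation V1 := {ffun {set S} -> G}.
Local Notation dim := (@Defs.dim S).

Lemma setUDK (A B : {set S}) : [disjoint A & B] -> (A :|: B) :\: A = B.
Proof.
move=> d; apply/setP => u; rewrite !inE; have [uA|uA] := boolP (u \in A) => //=.
by rewrite (disjointFr d uA).
Qed.

Lemma setUDK2 (A B : {set S}) : A \subset B -> A :|: (B :\: A) = B.
Proof.
move=> /subsetP sub; apply/setP => u; rewrite !inE; have [uA|uA] := boolP (u \in A) => //=.
by rewrite (sub _ uA).
Qed.

Lemma disjP (A B : {set S}) : (forall u, u \in A -> u \notin B) -> [disjoint A & B].
Proof. by move=> H; rewrite disjoints_subset; apply/subsetP => u /H; rewrite inE. Qed.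

Lemma disjointD (A B : {set S}) : [disjoint A & B :\: A].
Proof. by apply/disjP => u uA; rewrite inE uA. Qed.

Lemma cardsU_disj (A B : {set S}) : [disjoint A & B] -> #|A :|: B| = (#|A| + #|B|)%N.
Proof. by move=> d; rewrite cardsU disjoint_setI0 // cards0 subn0. Qed.

Lemma dim_U (A B : {set S}) : [disjoint A & B] -> dim (A :|: B) = dim A + dim B + 1.
Proof. move=> d; rewrite /dim cardsU_disj //; lia. Qed.

Lemma dim_D1 (A : {set S}) v : v \in A -> dim A = dim (A :\ v) + 1.
Proof. move=> vA; rewrite /dim (cardsD1 v A) vA; lia. Qed.

Definition esgn (A B : {set S}) : nat := (#|A| * (#|A| + #|B| + 1) + inv A B)%N.

Definition Phi (x : V2) : V2 :=
  [ffun p : {set S} * {set S} => if [disjoint p.1 & p.2] then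
     sgnz (esgn p.1 p.2) (x (p.1, p.1 :|: p.2)) else 0].
Definition Psi (y : V2) : V2 :=
  [ffun p : {set S} * {set S} => if p.1 \subset p.2 then
     sgnz (esgn p.1 (p.2 :\: p.1)) (y (p.1, p.2 :\: p.1)) else 0].

Lemma PhiPsi (y : V2) : (forall p, y p != 0 -> [disjoint p.1 & p.2]) -> Phi (Psi y) = y.
Proof.
move=> H; apply/ffunP => -[A B]; rewrite !ffunE /=.
case: ifP => d.
  by rewrite subsetUl setUDK // sgnzK.
by apply/esym/eqP; apply: contraFT d => /H.
Qed.

Lemma PsiPhi (x : V2) : (forall p, x p != 0 -> p.1 \subset p.2) -> Psi (Phi x) = x.
Proof.
move=> H; apply/ffunP => -[A B]; rewrite !ffunE /=.
case: ifP => d.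
  by rewrite disjointD setUDK2 // sgnzK.
by apply/esym/eqP; apply: contraFT d => /H.
Qed.


Lemma Phi_supp (red : bool) (K : {set {set S}}) s t (x : V2) : simplicial_complex K ->
  Tsupp red K s (s + t + 1) x -> Asupp red K s t (Phi x).
Proof.
move=> HK H [A B]; rewrite ffunE /=; case: ifP => d; last by rewrite eqxx.
move/sgnz_neq0/H => /and5P[/= a sub inK ds dt].
rewrite a ds /= inE inK d /= (HK.2.2 _ _ inK (subsetUl _ _)) /=.
move: dt ds; rewrite dim_U // => /eqP dt /eqP ds; apply/eqP; lia.
Qed.

Lemma Psi_supp (red : bool) (K : {set {set S}}) s t (y : V2) :
  Asupp red K s t y -> Tsupp red K s (s + t + 1) (Psi y).
Proof.
move=> H [A B]; rewrite ffunE /=; case: ifP => sub; last by rewrite eqxx.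
move/sgnz_neq0/H => /and5P[/= a inA ds lk dt].
move: lk; rewrite inE setUDK2 // => /andP[inK d].
rewrite a inK ds /=.
rewrite -(setUDK2 sub) dim_U ?disjointD //; move/eqP: ds => ->; move/eqP: dt => ->.
by rewrite eqxx.
Qed.

Lemma vert_supp (red : bool) (K : {set {set S}}) s t (w : V2) :
  Tsupp red K s t w -> Tsupp red K s (t + 1) (vert red K w).
Proof.
move=> H [A B]; rewrite ffunE /=; case: ifP => g; last by rewrite eqxx.
move/and3P: g => [a sub inK].
move/sgnz_neq0/sum_neq0 => [v /andP[vB /sgnz_neq0 /H /and5P[_ _ _ ds dt]]].
rewrite a sub inK ds /=; move: vB; rewrite inE => /andP[_ vB].
by rewrite (dim_D1 vB) (eqP dt).
Qed.

Lemma Asupp_disj (red : bool) (K : {set {set S}}) s t (y : V2) : Asupp red K s t y ->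
  forall p, y p != 0 -> [disjoint p.1 & p.2].
Proof. by move=> H p /H /and5P[_ _ _ ]; rewrite inE => /andP[_ ->]. Qed.

Lemma Tsupp_sub (red : bool) (K : {set {set S}}) s t (x : V2) : Tsupp red K s t x ->
  forall p, x p != 0 -> p.1 \subset p.2.
Proof. by move=> H p /H /and5P[]. Qed.

Lemma cobd_Phi (red : bool) (K : {set {set S}}) (x : V2) A B : adm red A -> B \in link K A ->
  cobd (link K A) (slice (Phi x) A) B =
  sgnz (esgn A B + #|A| + 1) (vert red K x (A, A :|: B)).
Proof.
move=> a lk; move: (lk); rewrite inE => /andP[inK d].
rewrite !ffunE /= lk a subsetUl inK /= setUDK // -sgnzD sgnz_sum.
apply: eq_bigr => v vB; rewrite !ffunE /=.
have vA : v \notin A by rewrite (disjointFl d vB).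
have d' : [disjoint A & B :\ v].
  by apply/disjP => u uA; rewrite inE negb_and (disjointFr d uA) orbT.
have -> : A :|: B :\ v = (A :|: B) :\ v.
  apply/setP => u; rewrite !inE; case: (eqVneq u v) => [->|] //=.
  by rewrite (negbTE vA).
rewrite d' -!sgnzD; apply: sgnz_odd.
rewrite count_lt_U //.
set B0 := B :\ v.
have eB : B = v |: B0 by rewrite setD1K.
have vB0 : v \notin B0 by rewrite !inE eqxx.
have c1 : count_lt v B = count_lt v B0 by rewrite {1}eB count_lt_self.
have i1 : inv A B = (inv A B0 + count_gt v A)%N by rewrite {1}eB inv_r.
have c2 : #|B| = (#|B0|).+1 by rewrite {1}eB cardsU1 vB0.
rewrite /esgn c1 i1 c2 -(count_lt_gt vA).
par.
Qed.


Lemma Phi_vert (red : bool) (K : {set {set S}}) (x : V2) A B : adm red A -> B \in link K A ->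
  Phi (vert red K x) (A, B) = sgnz (#|A|.+1) (cobd (link K A) (slice (Phi x) A) B).
Proof.
move=> a lk; rewrite (cobd_Phi x a lk); move: (lk); rewrite inE => /andP[inK d].
rewrite ffunE /= d -sgnzD; apply: sgnz_odd; rewrite /esgn; par.
Qed.

Lemma Phi_horiz (red : bool) (K : {set {set S}}) (x : V2) : (forall p, x p != 0 -> p.2 \in K) ->
  Phi (horiz red K x) = dA red (Phi x).
Proof.
move=> hx; apply/ffunP => -[A B]; rewrite !ffunE /=.
have [a|a] := boolP (adm red A); last first.
  by case: ifP => // _; rewrite sgnz0.
case: ifP => d; last first.
  apply/esym/big1 => v vA; rewrite !ffunE; case: ifP => // vB.
  rewrite /=; case: ifP => [d'|]; last by rewrite sgnz0.
  exfalso; move/negbT: d => /negP; apply; apply/disjP => u uA; apply/negP => uB.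
  have uv : u != v by apply/eqP => e; move: vA; rewrite -e uA.
  have uvA : u \in v |: A by rewrite inE uA orbT.
  by move: (disjointFr d' uvA); rewrite !inE uv uB.
rewrite subsetUl /=.
have [inK|inK] := boolP (A :|: B \in K); last first.
  rewrite sgnz0; apply/esym/big1 => v vA; rewrite !ffunE; case: ifP => // vB.
  rewrite /=; case: ifP => [d'|]; last by rewrite sgnz0.
  have -> : v |: A :|: B :\ v = A :|: B.
    apply/setP => u; rewrite !inE; case: (eqVneq u v) => [->|] //=; by rewrite vB orbT.
  by rewrite (_ : x _ = 0) ?sgnz0 //; apply/eqP; apply: contraNT inK => /hx.
rewrite setUDK // sgnz_sum big_mkcond [RHS]big_mkcond /=.
apply: eq_bigr => v _; case: (boolP (v \in B)) => vB; last first.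
  by case: ifP => //; rewrite ffunE (negbTE vB).
have vA : v \notin A by rewrite (disjointFl d vB).
rewrite vA !ffunE vB /=.
have d' : [disjoint v |: A & B :\ v].
  apply/disjP => u; rewrite !inE => /orP[/eqP->|uA]; first by rewrite eqxx.
  by rewrite (disjointFr d uA) andbF.
have -> : v |: A :|: B :\ v = A :|: B.
  apply/setP => u; rewrite !inE; case: (eqVneq u v) => [->|] //=; by rewrite vB orbT.
rewrite d' -!sgnzD; apply: sgnz_odd.
set B0 := B :\ v.
have eB : B = v |: B0 by rewrite setD1K.
have vB0 : v \notin B0 by rewrite !inE eqxx.
have i1 : inv A B = (inv A B0 + count_gt v A)%N by rewrite {1}eB inv_r.
have c2 : #|B| = (#|B0|).+1 by rewrite {1}eB cardsU1 vB0.
rewrite /esgn i1 c2 inv_l // cardsU1 vA -(count_lt_gt vA) -(count_lt_gt vB0).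
par.
Qed.
End Part1.

Section Part1b.
Variable S : finType.
Variable G : zmodType.
Local Notation V2 := {ffun {set S} * {set S} -> G}.
Local Notation V1 := {ffun {set S} -> G}.
Local Notation dim := (@Defs.dim S).

Lemma vert0 (red : bool) (K : {set {set S}}) : vert red K (0 : V2) = 0.
Proof.
apply/ffunP => p; rewrite !ffunE; case: ifP => // _.
by rewrite big1 ?sgnz0 // => v _; rewrite ffunE sgnz0.
Qed.

Lemma cobd0 (L : {set {set S}}) : cobd L (0 : V1) = 0.
Proof.
apply/ffunP => p; rewrite !ffunE; case: ifP => // _.
by rewrite big1 // => v _; rewrite ffunE sgnz0.
Qed.

Lemma Tsupp0 (red : bool) (K : {set {set S}}) s t : Tsupp red K s t (0 : V2).
Proof. by move=> p; rewrite ffunE eqxx. Qed.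

Lemma Asupp0 (red : bool) (K : {set {set S}}) s t : Asupp red K s t (0 : V2).
Proof. by move=> p; rewrite ffunE eqxx. Qed.

Lemma L1B0 (red : bool) (K : {set {set S}}) s t : L1B red K s t (0 : V2).
Proof. by exists 0; split; [apply: Tsupp0 | rewrite vert0]. Qed.

Lemma slice0 (A : {set S}) : slice (0 : V2) A = 0.
Proof. by apply/ffunP => p; rewrite !ffunE. Qed.

Lemma HB0 (L : {set {set S}}) n : HB L n (0 : V1).
Proof. by exists 0; split; [move=> p; rewrite ffunE eqxx | rewrite cobd0]. Qed.

Lemma AB0 (red : bool) (K : {set {set S}}) s t : AB red K s t (0 : V2).
Proof. by split; [apply: Asupp0 | move=> A; rewrite slice0; apply: HB0]. Qed.

Lemma PhiD (x y : V2) : Phi (x + y) = Phi x + Phi y.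
Proof. by apply/ffunP => p; rewrite !ffunE; case: ifP; rewrite ?addr0 // sgnzDr. Qed.

Lemma PsiD (x y : V2) : Psi (x + y) = Psi x + Psi y.
Proof. by apply/ffunP => p; rewrite !ffunE; case: ifP; rewrite ?addr0 // sgnzDr. Qed.

Lemma Asupp0E (red : bool) (K : {set {set S}}) s t (y : V2) (A B : {set S}) :
  Asupp red K s t y -> ~~ [&& adm red A, A \in K, dim A == s, B \in link K A & dim B == t] ->
  y (A, B) = 0.
Proof. by move=> H h; apply/eqP; apply: contraNT h => /H. Qed.

Lemma Tsupp0E (red : bool) (K : {set {set S}}) s t (y : V2) (A B : {set S}) :
  Tsupp red K s t y -> ~~ [&& adm red A, A \subset B, B \in K, dim A == s & dim B == t] ->
  y (A, B) = 0.
Proof. by move=> H h; apply/eqP; apply: contraNT h => /H. Qed.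

Lemma cobd_sgnz (L : {set {set S}}) n (f : V1) :
  cobd L [ffun r => sgnz n (f r)] = [ffun r => sgnz n (cobd L f r)].
Proof.
apply/ffunP => r; rewrite !ffunE; case: ifP => _; last by rewrite sgnz0.
rewrite sgnz_sum; apply: eq_bigr => v _; rewrite ffunE -!sgnzD; apply: sgnz_odd; par.
Qed.

End Part1b.

Section Part1c.
Variable S : finType.
Variable G : zmodType.
Local Notation V2 := {ffun {set S} * {set S} -> G}.
Local Notation V1 := {ffun {set S} -> G}.
Local Notation dim := (@Defs.dim S).
Variable K : {set {set S}}.
Hypothesis HK : simplicial_complex K.
Variable red : bool.

Lemma Phi_Z s t (x : V2) : L1Z red K s (s + t + 1) x -> AZ red K s t (Phi x).
Proof.
move=> [Hs Hv]; have HA := Phi_supp HK Hs; split => // A; split.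
  move=> B; rewrite ffunE => /HA /and5P[_ _ _ -> ->]; by rewrite andbT.
apply/ffunP => B; rewrite [RHS]ffunE.
have [a|a] := boolP (adm red A); last first.
  rewrite ffunE; case: ifP => // _; apply: big1 => v _.
  by rewrite ffunE (Asupp0E HA) ?sgnz0 // (negbTE a).
have [lk|lk] := boolP (B \in link K A); last by rewrite ffunE (negbTE lk).
by rewrite (cobd_Phi x a lk) Hv ffunE sgnz0.
Qed.

Lemma Psi_Z s t (y : V2) : AZ red K s t y -> L1Z red K s (s + t + 1) (Psi y).
Proof.
move=> [Hs Hz]; split; first exact: Psi_supp.
apply/ffunP => -[A B]; rewrite [RHS]ffunE ffunE /=.
case: ifP => // /and3P[a sub inK].
have lk : B :\: A \in link K A by rewrite inE setUDK2 // inK disjointD.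
have := cobd_Phi (Psi y) a lk.
rewrite PhiPsi; last exact: Asupp_disj Hs.
rewrite (Hz A).2 ffunE setUDK2 // ffunE /= a sub inK /= => /(f_equal (sgnz (esgn A (B :\: A) + #|A| + 1))).
by rewrite sgnz0 sgnzK => <-.
Qed.

Lemma Phi_B s t (x : V2) : L1B red K s (s + t + 1) x -> AB red K s t (Phi x).
Proof.
move=> [w [Hw ->]]; rewrite addrK in Hw.
have e : s + t = s + (t - 1) + 1 by rewrite -addrA addrNK.
have Hv := vert_supp Hw; have HA := Phi_supp HK Hv.
have Hw' : Tsupp red K s (s + (t - 1) + 1) w by rewrite -e.
have HAw := Phi_supp HK Hw'.
split => // A.
exists [ffun B => sgnz (#|A|.+1) (Phi w (A, B))]; split.
  by move=> B; rewrite ffunE => /sgnz_neq0 /HAw /and5P[_ _ _ -> ->].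
apply/ffunP => B; rewrite ffunE /=.
have [a|a] := boolP (adm red A); last first.
  rewrite (Asupp0E HA) ?(negbTE a) //.
  rewrite ffunE; case: ifP => // _; apply/esym/big1 => v _.
  by rewrite ffunE (Asupp0E HAw) ?sgnz0 // (negbTE a).
have [lk|lk] := boolP (B \in link K A); last first.
  by rewrite (Asupp0E HA) ?(negbTE lk) ?andbF // ffunE (negbTE lk).
rewrite (Phi_vert w a lk).
have -> : [ffun B => sgnz #|A|.+1 (Phi w (A, B))] = [ffun B => sgnz #|A|.+1 (slice (Phi w) A B)].
  by apply/ffunP => r; rewrite !ffunE.
by rewrite cobd_sgnz [in RHS]ffunE.
Qed.


Lemma Psi_B s t (y : V2) : AB red K s t y -> L1B red K s (s + t + 1) (Psi y).
Proof.
move=> [Hs Hb].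
have gf : forall A, {g : V1 | supp1 (link K A) (t - 1) g /\ slice y A = cobd (link K A) g}.
  by move=> A; apply: constructive_indefinite_description; exact: Hb A.
pose y' : V2 := [ffun p : {set S} * {set S} => if [&& adm red p.1, p.1 \in K & dim p.1 == s]
  then sgnz (#|p.1|.+1) (sval (gf p.1) p.2) else 0].
have Hy' : Asupp red K s (t - 1) y'.
  move=> [A B]; rewrite ffunE /=; case: ifP => [/and3P[a inA ds]|]; last by rewrite eqxx.
  by move/sgnz_neq0 => /(proj1 (svalP (gf A))) /andP[lk dt]; rewrite a inA ds lk dt.
pose w := Psi y'.
have Hw : Tsupp red K s (s + t) w by have := Psi_supp Hy'; rewrite -addrA subrK.
exists w; rewrite addrK; split => //.
have Hv := vert_supp Hw.
rewrite -(PsiPhi (Tsupp_sub Hv)); congr Psi.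
have HA := Phi_supp HK Hv.
apply/ffunP => -[A B].
case: (boolP (adm red A && (B \in link K A))) => [/andP[a lk]|h]; last first.
  rewrite (Asupp0E Hs) ?(Asupp0E HA) //; apply: contra h => /and5P[a _ _ lk _]; by rewrite a lk.
rewrite (Phi_vert w a lk) /w PhiPsi; last exact: Asupp_disj Hy'.
have inA : A \in K.
  by move: lk; rewrite inE => /andP[inK _]; apply: (HK.2.2 _ _ inK (subsetUl _ _)).
case: (eqVneq (dim A) s) => ds.
  have -> : slice y' A = [ffun r => sgnz #|A|.+1 (sval (gf A) r)].
    by apply/ffunP => r; rewrite !ffunE /= a inA ds eqxx.
  by rewrite cobd_sgnz ffunE sgnzK -(proj2 (svalP (gf A))) ffunE.
have -> : slice y' A = 0 by apply/ffunP => r; rewrite !ffunE /= (negbTE ds) !andbF.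
by rewrite cobd0 ffunE sgnz0 (Asupp0E Hs) // (negbTE ds) !andbF.
Qed.

Lemma part1 : exists Phi' Psi' : int -> int -> V2 -> V2,
       (forall s t : int,
          sq_iso (L1Z red K s (s + t + 1)) (L1B red K s (s + t + 1))
                 (AZ red K s t) (AB red K s t) (Phi' s t) (Psi' s t)) /\
       (forall (s t : int) (x : V2), L1Z red K s (s + t + 1) x ->
          AB red K (s - 1) (t + 1)
             (Phi' (s - 1) (t + 1) (horiz red K x) - dA red (Phi' s t x))).
Proof.
exists (fun _ _ => @Phi S G), (fun _ _ => @Psi S G); split.
  move=> s t; split.
  - split; [exact: Phi_Z | | exact: Phi_B].
    by move=> x y _ _; rewrite PhiD subDD; apply: AB0.
  - split; [exact: Psi_Z | | exact: Psi_B].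
    by move=> x y _ _; rewrite PsiD subDD; apply: L1B0.
  - move=> x [Hx _]; rewrite PsiPhi ?subrr; first exact: L1B0.
    exact: Tsupp_sub Hx.
  - move=> y [Hy _]; rewrite PhiPsi ?subrr; first exact: AB0.
    exact: Asupp_disj Hy.
move=> s t x [Hx _]; rewrite Phi_horiz ?subrr; first exact: AB0.
by move=> p /Hx /and5P[].
Qed.
End Part1c.

Section Part3.
Variable S : finType.
Variable G : zmodType.
Local Notation V2 := {ffun {set S} * {set S} -> G}.
Local Notation V1 := {ffun {set S} -> G}.
Local Notation dim := (@Defs.dim S).
Variable K : {set {set S}}.
Hypothesis HK : simplicial_complex K.

Lemma adm_n0 r (A : {set S}) : A != set0 -> adm r A = true.
Proof. by rewrite /adm => ->; rewrite orbT. Qed.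

Lemma dim0 : dim set0 = -1.
Proof. by rewrite /dim cards0. Qed.

Lemma dim1 (v : S) : dim [set v] = 0.
Proof. by rewrite /dim cards1. Qed.

Lemma dim_n0 (A : {set S}) s : s != -1 -> dim A == s -> A != set0.
Proof. by move=> hs /eqP ds; apply/eqP => eA; move: hs; rewrite -ds eA dim0 eqxx. Qed.

Lemma Tsupp_set0 r s t (x : V2) B : Tsupp r K s t x -> s != -1 -> x (set0, B) = 0.
Proof. by move=> H hs; apply: (Tsupp0E H); rewrite dim0 eq_sym (negbTE hs) !andbF. Qed.

Lemma Tsupp_set1 r s t (x : V2) v B : Tsupp r K s t x -> s != 0 -> x ([set v], B) = 0.
Proof. by move=> H hs; apply: (Tsupp0E H); rewrite dim1 eq_sym (negbTE hs) !andbF. Qed.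

Lemma Tsupp_eq s t (x : V2) : s != -1 -> Tsupp false K s t x <-> Tsupp true K s t x.
Proof.
move=> hs; split => H p /H /and5P[a b c d e];
by rewrite b c d e (adm_n0 _ (dim_n0 hs d)).
Qed.

Lemma vert_eq (x : V2) : (forall B, x (set0, B) = 0) -> vert false K x = vert true K x.
Proof.
move=> h; apply/ffunP => -[A B]; rewrite !ffunE /=.
have [->|nA] := eqVneq A set0; last by rewrite ?nA ?(adm_n0 _ nA).
rewrite /= sub0set; case: ifP => // _; rewrite big1 ?sgnz0 // => v _; by rewrite h sgnz0.
Qed.

Lemma horiz_eq (x : V2) : (forall v B, x ([set v], B) = 0) -> horiz false K x = horiz true K x.
Proof.
move=> h; apply/ffunP => -[A B]; rewrite !ffunE /=.
have [->|nA] := eqVneq A set0; last by rewrite ?nA ?(adm_n0 _ nA).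
rewrite /= sub0set; case: ifP => // _; rewrite big1 // => v _; by rewrite setU0 h sgnz0.
Qed.

Lemma L1Z_eq s t (x : V2) : s != -1 -> L1Z false K s t x <-> L1Z true K s t x.
Proof.
move=> hs; split => -[Hx Hv].
  have Hx' := proj1 (Tsupp_eq t x hs) Hx; split => //.
  by rewrite -vert_eq // => B; apply: Tsupp_set0 Hx hs.
have Hx' := proj2 (Tsupp_eq t x hs) Hx; split => //.
by rewrite vert_eq // => B; apply: Tsupp_set0 Hx hs.
Qed.

Lemma L1B_eq s t (x : V2) : s != -1 -> L1B false K s t x <-> L1B true K s t x.
Proof.
move=> hs; split => -[y [Hy ->]].
  exists y; split; first exact: (proj1 (Tsupp_eq _ y hs)).
  by rewrite vert_eq // => B; apply: Tsupp_set0 Hy hs.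
exists y; split; first exact: (proj2 (Tsupp_eq _ y hs)).
by rewrite vert_eq // => B; apply: Tsupp_set0 Hy hs.
Qed.

Lemma L2Z_eq s n (x : V2) : 0 < s -> L2Z false K s n x <-> L2Z true K s n x.
Proof.
move=> hs.
have h1 : s != -1 by apply/eqP => e; move: hs; rewrite e.
have h0 : s != 0 by apply/eqP => e; move: hs; rewrite e.
have h2 : s - 1 != -1 by apply/eqP => e; move: h0; rewrite -(subrK 1 s) e addNr eqxx.
split => -[Hz Hb].
  have Hz' := proj1 (L1Z_eq _ x h1) Hz; split => //.
  rewrite -horiz_eq; first exact: (proj1 (L1B_eq _ _ h2)).
  by move=> v B; apply: Tsupp_set1 Hz.1 h0.
have Hz' := proj2 (L1Z_eq _ x h1) Hz; split => //.
rewrite horiz_eq; first exact: (proj2 (L1B_eq _ _ h2)).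
by move=> v B; apply: Tsupp_set1 Hz.1 h0.
Qed.

Lemma L2B_eq s n (x : V2) : 0 <= s -> L2B false K s n x <-> L2B true K s n x.
Proof.
move=> hs.
have h1 : s != -1 by apply/eqP => e; move: hs; rewrite e.
have h3 : s + 1 != -1 by apply/eqP => e; move: hs; rewrite -(addrK 1 s) e.
have h0 : s + 1 != 0 by apply/eqP => e; move: hs; rewrite -(addrK 1 s) e.
split => -[y [z [Hy [Hz ->]]]].
  exists y, z; split; first exact: (proj1 (L1Z_eq _ _ h3)).
  split; first exact: (proj1 (L1B_eq _ _ h1)).
  by rewrite horiz_eq // => v B; apply: Tsupp_set1 Hy.1 h0.
exists y, z; split; first exact: (proj2 (L1Z_eq _ _ h3)).
split; first exact: (proj2 (L1B_eq _ _ h1)).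
by rewrite horiz_eq // => v B; apply: Tsupp_set1 Hy.1 h0.
Qed.

End Part3.

Section Part2.
Variable S : finType.
Variable G : zmodType.
Local Notation V2 := {ffun {set S} * {set S} -> G}.
Local Notation V1 := {ffun {set S} -> G}.
Local Notation dim := (@Defs.dim S).
Variable K : {set {set S}}.
Hypothesis HK : simplicial_complex K.

Definition f2 (x : V2) : V1 := slice (horiz true K x) set0.
Definition f3 (g : V1) : V2 := [ffun p : {set S} * {set S} => if p.1 == set0 then g p.2 else 0].
Definition aug (x : V2) : V1 := [ffun B : {set S} => \sum_(v in B) x ([set v], B)].

Lemma horiz0 r : horiz r K (0 : V2) = 0.
Proof.
apply/ffunP => p; rewrite !ffunE; case: ifP => // _.
by rewrite big1 // => v _; rewrite ffunE sgnz0.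
Qed.

Lemma horizD r (x y : V2) : horiz r K (x + y) = horiz r K x + horiz r K y.
Proof.
apply/ffunP => p; rewrite !ffunE; case: ifP => _; last by rewrite addr0.
by rewrite -big_split; apply: eq_bigr => v _; rewrite ffunE sgnzDr.
Qed.

Lemma vertD r (x y : V2) : vert r K (x + y) = vert r K x + vert r K y.
Proof.
apply/ffunP => p; rewrite !ffunE; case: ifP => _; last by rewrite addr0.
by rewrite -sgnzDr -big_split; congr sgnz; apply: eq_bigr => v _; rewrite ffunE sgnzDr.
Qed.

Lemma cobdN (L : {set {set S}}) (g : V1) : cobd L (- g) = - cobd L g.
Proof.
apply/ffunP => p; rewrite !ffunE; case: ifP => _; last by rewrite oppr0.
by rewrite -sumrN; apply: eq_bigr => v _; rewrite ffunE sgnzN.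
Qed.

Lemma f3D (g h : V1) : f3 (g + h) = f3 g + f3 h.
Proof. by apply/ffunP => p; rewrite !ffunE; case: ifP; rewrite ?addr0. Qed.

Lemma f3N (g : V1) : f3 (- g) = - f3 g.
Proof. by apply/ffunP => p; rewrite !ffunE; case: ifP; rewrite ?oppr0. Qed.

Lemma f30 : f3 0 = 0.
Proof. by apply/ffunP => p; rewrite !ffunE; case: ifP. Qed.

Lemma f2D (x y : V2) : f2 (x + y) = f2 x + f2 y.
Proof. by rewrite /f2 horizD; apply/ffunP => B; rewrite !ffunE. Qed.

Lemma slice_f3 (g : V1) : slice (f3 g) set0 = g.
Proof. by apply/ffunP => B; rewrite !ffunE eqxx. Qed.

Lemma sliceD (x y : V2) (A : {set S}) : slice (x + y) A = slice x A + slice y A.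
Proof. by apply/ffunP => B; rewrite !ffunE. Qed.

Lemma sliceN (x : V2) (A : {set S}) : slice (- x) A = - slice x A.
Proof. by apply/ffunP => B; rewrite !ffunE. Qed.

Lemma f2E (x : V2) (B : {set S}) : f2 x B = if B \in K then aug x B else 0.
Proof.
rewrite !ffunE /= sub0set /=; case: ifP => // _.
by rewrite setD0; apply: eq_bigr => v _; rewrite count_lt0 setU0.
Qed.

Lemma f3_slice r t (y : V2) : Tsupp r K (-1) t y -> y = f3 (slice y set0).
Proof.
move=> H; apply/ffunP => -[A B]; rewrite !ffunE /=.
have [->//|nA] := eqVneq A set0.
apply: (Tsupp0E H); apply/negP => /and5P[_ _ _ d _].
by move: d nA; rewrite /dim -card_gt0 => /eqP; lia.
Qed.

Lemma f3_supp n (g : V1) : supp1 K n g -> Tsupp true K (-1) n (f3 g).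
Proof.
move=> H [A B]; rewrite ffunE /=; have [->|nA] := eqVneq A set0; last by rewrite eqxx.
by move/H => /andP[-> ->]; rewrite sub0set dim0 eqxx.
Qed.

Lemma supp1_slice r t (y : V2) : Tsupp r K (-1) t y -> supp1 K t (slice y set0).
Proof. by move=> H B; rewrite ffunE => /H /and5P[_ _ -> _ ->]. Qed.

Lemma supp1N (L : {set {set S}}) n (g : V1) : supp1 L n g -> supp1 L n (- g).
Proof. by move=> H B; rewrite ffunE oppr_eq0 => /H. Qed.

Lemma vert_f3 (g : V1) : vert true K (f3 g) = f3 (- cobd K g).
Proof.
apply/ffunP => -[A B]; rewrite !ffunE /=.
have [->|nA] := eqVneq A set0; last first.
  case: ifP => // _; rewrite big1 ?sgnz0 // => v _; by rewrite ffunE /= (negbTE nA) sgnz0.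
rewrite sub0set /=; case: ifP => _; last by rewrite oppr0.
rewrite cards0 sgnz1 setD0; congr (- _); rewrite {1}/sgnz /=; apply: eq_bigr => v _; by rewrite ffunE /= eqxx.
Qed.

Lemma horiz_f3 (g : V1) : horiz true K (f3 g) = 0.
Proof.
apply/ffunP => -[A B]; rewrite !ffunE /=; case: ifP => // _.
rewrite big1 // => v _; rewrite ffunE /=.
by case: eqP => [/setP/(_ v)|]; rewrite ?sgnz0 // !inE eqxx.
Qed.

Lemma horiz_false0 r t (x : V2) : Tsupp r K 0 t x -> horiz false K x = 0.
Proof.
move=> H; apply/ffunP => -[A B]; rewrite !ffunE /=; case: ifP => // /and3P[nA _ _].
rewrite big1 // => v; rewrite inE => /andP[vA _].
rewrite (Tsupp0E H) ?sgnz0 //; apply/negP => /and5P[_ _ _ d _]; move: d.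
rewrite /dim cardsU1 vA /=; move: nA; rewrite -card_gt0 => nA /eqP; lia.
Qed.

Lemma horiz_n0 r r' (x : V2) (A B : {set S}) : A != set0 -> horiz r K x (A, B) = horiz r' K x (A, B).
Proof. by move=> nA; rewrite !ffunE /= !(adm_n0 _ nA). Qed.

Lemma horiz_true_f3 r t (x : V2) : Tsupp r K 0 t x -> horiz true K x = f3 (f2 x).
Proof.
move=> H; apply/ffunP => -[A B]; rewrite [RHS]ffunE /=.
have [->|nA] := eqVneq A set0; first by rewrite /f2 /slice [RHS]ffunE.
rewrite (@horiz_n0 true false x A B nA) (horiz_false0 H) ffunE //.
Qed.

Lemma exch (B : {set S}) (F : S -> S -> G) :
  \sum_(v in B) \sum_(u in B :\ v) F v u = \sum_(u in B) \sum_(v in B :\ u) F v u.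
Proof.
rewrite (exchange_big_dep (fun u => u \in B)) /=; last by move=> v u _; rewrite inE => /andP[].
apply: eq_bigr => u uB; apply: eq_bigl => v; rewrite !inE uB andbT andbC.
by rewrite eq_sym.
Qed.

Lemma vert_aug r (w : V2) (B : {set S}) : B \in K ->
  \sum_(v in B) vert r K w ([set v], B) = cobd K (aug w) B.
Proof.
move=> inK; rewrite ffunE inK.
have h1 : forall v : S, [set v] != set0 by move=> v; apply/set0Pn; exists v; rewrite inE.
under eq_bigr => v vB do rewrite ffunE /= (adm_n0 _ (h1 v)) sub1set vB inK /= cards1 /= sgnz_sum.
rewrite exch; apply: eq_bigr => u _; rewrite ffunE sgnz_sum; apply: eq_bigr => v _.
by rewrite /sgnz.
Qed.

Lemma antisym_sum (B : {set S}) (F : S -> S -> G) :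
  (forall v w, v != w -> F w v = - F v w) ->
  \sum_(v in B) \sum_(w in B :\ v) F v w = 0.
Proof.
move=> hF.
have e : forall v, v \in B -> \sum_(w in B :\ v) F v w =
   \sum_(w in B) (if vlt v w then F v w else 0) + \sum_(w in B) (if vlt w v then F v w else 0).
  move=> v vB; rewrite -big_split /= big_mkcond [RHS]big_mkcond /=; apply: eq_bigr => w _.
  rewrite !inE; case: (eqVneq w v) => [->|wv] /=; first by rewrite vlt_irr addr0; case: (v \in B).
  case: (w \in B) => //.
  have ht := vlt_total wv.
  case h1: (vlt v w); case h2: (vlt w v) => /=.
  - by move: (vlt_asym h1); rewrite h2.
  - by rewrite addr0.
  - by rewrite add0r.
  - by move: ht; rewrite h1 h2.
rewrite (eq_bigr _ e) big_split /= [X in _ + X](exchange_big).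
rewrite -big_split /=; apply: big1 => v _; rewrite -big_split /=; apply: big1 => w _.
case: (boolP (vlt v w)) => h; last by rewrite addr0.
have vw : v != w by apply: contraTneq h => ->; rewrite vlt_irr.
rewrite hF; [by rewrite addNr | by rewrite eq_sym].
Qed.

Lemma f2_horiz_false (y : V2) : f2 (horiz false K y) = 0.
Proof.
have h1 : forall v : S, [set v] != set0 by move=> v; apply/set0Pn; exists v; rewrite inE.
apply/ffunP => B; rewrite f2E [RHS]ffunE; case: ifP => // inK.
rewrite ffunE.
under eq_bigr => v vB do rewrite ffunE /= (h1 v) sub1set vB inK /=.
apply: antisym_sum => v w vw.
rewrite !count_lt_set1; have := vlt_total vw.
have -> : v |: [set w] = w |: [set v] by rewrite setUC.
case: (boolP (vlt v w)) => g1; case: (boolP (vlt w v)) => g2 //= _.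
all: try by move: (vlt_asym g1); rewrite g2.
all: by rewrite /sgnz /= ?opprK.
Qed.

End Part2.

Section Part2b.
Variable S : finType.
Variable G : zmodType.
Local Notation V2 := {ffun {set S} * {set S} -> G}.
Local Notation V1 := {ffun {set S} -> G}.
Local Notation dim := (@Defs.dim S).
Variable K : {set {set S}}.
Hypothesis HK : simplicial_complex K.

Lemma L2B0 r s t : L2B r K s t (0 : V2).
Proof.
exists 0, 0; split; first by split; [apply: Tsupp0 | rewrite vert0].
by split; [apply: L1B0 | rewrite horiz0 addr0].
Qed.

Lemma h01 : (0 : int) != -1. Proof. by []. Qed.

Lemma HZ_f2 t (x : V2) : L2Z false K 0 t x -> HZ K t (f2 K x).
Proof.
move=> [[Hx Hv] _]; split.
  move=> B; rewrite f2E; case: ifP => inK; last by rewrite eqxx.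
  by rewrite ffunE => /sum_neq0 [v /andP[_ /Hx /and5P[_ _ _ _ ->]]]; rewrite ?inK.
have -> : cobd K (f2 K x) = cobd K (aug x).
  apply/ffunP => B; rewrite !ffunE; case: ifP => // inK; apply: eq_bigr => u _.
  by rewrite f2E (HK.2.2 _ _ inK (subD1set _ _)).
apply/ffunP => B; rewrite [RHS]ffunE.
case: (boolP (B \in K)) => inK; last by rewrite ffunE (negbTE inK).
by rewrite -(vert_aug false) // Hv big1 // => v _; rewrite ffunE.
Qed.

Lemma HB_f2 t (x : V2) : L2B false K 0 t x -> HB K t (f2 K x).
Proof.
move=> [y [z [_ [[w [Hw ->]] ->]]]].
rewrite f2D f2_horiz_false add0r.
exists (aug w); split.
  move=> B; rewrite ffunE => /sum_neq0 [v /andP[_ /Hw /and5P[_ _ -> _ ->]]] //.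
apply/ffunP => B; rewrite f2E; case: ifP => inK; last by rewrite ffunE inK.
by rewrite ffunE vert_aug.
Qed.

Lemma Z_f3 t (g : V1) : HZ K t g -> L2Z true K (-1) t (f3 g).
Proof.
move=> [Hs Hc]; split; first by split; [apply: f3_supp | rewrite vert_f3 Hc oppr0 f30].
by rewrite horiz_f3; apply: L1B0.
Qed.

Lemma B_f3 t (g : V1) : HB K t g -> L2B true K (-1) t (f3 g).
Proof.
move=> [h [Hh ->]].
exists 0, (vert true K (f3 (- h))); split; first by split; [apply: Tsupp0 | rewrite vert0].
split; first by exists (f3 (- h)); split => //; apply: f3_supp; apply: supp1N.
by rewrite horiz0 add0r vert_f3 cobdN opprK.
Qed.

Lemma L2Z_f1 t (x : V2) : L2Z true K 0 t x -> L2Z false K 0 t x.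
Proof.
move=> [Hz _]; split; first exact: (proj2 (L1Z_eq K _ _ h01)).
by rewrite (horiz_false0 Hz.1); apply: L1B0.
Qed.

Lemma ex12a t (x : V2) : L2Z true K 0 t x -> HB K t (f2 K x).
Proof.
move=> [_ [y [Hy e]]]; rewrite sub0r in Hy.
exists (- slice y set0); split; first by apply: supp1N; apply: supp1_slice Hy.
by rewrite /f2 e {1}(f3_slice Hy) vert_f3 slice_f3 cobdN.
Qed.

Lemma ex12b t (y : V2) : L2Z false K 0 t y -> HB K t (f2 K y) ->
  exists x, L2Z true K 0 t x /\ L2B false K 0 t (x - y).
Proof.
move=> [Hz _] [h [Hh e]]; exists y; rewrite subrr; split; last exact: L2B0.
have Hz' := proj1 (L1Z_eq K _ _ h01) Hz; split => //.
exists (f3 (- h)); split; first by rewrite sub0r; apply: f3_supp; apply: supp1N.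
by rewrite (horiz_true_f3 Hz.1) e vert_f3 cobdN opprK.
Qed.

Lemma ex23a t (x : V2) : L2Z false K 0 t x -> L2B true K (-1) t (f3 (f2 K x)).
Proof.
move=> [Hz _]; exists x, 0; split; first by rewrite addNr; apply: (proj1 (L1Z_eq K _ _ h01)).
by split; [apply: L1B0 | rewrite addr0 (horiz_true_f3 Hz.1)].
Qed.

Lemma ex23b t (g : V1) : HZ K t g -> L2B true K (-1) t (f3 g) ->
  exists x, L2Z false K 0 t x /\ HB K t (f2 K x - g).
Proof.
move=> _ [y [z [Hy [[w [Hw ez]] e]]]].
rewrite addNr in Hy; exists y; split.
  split; first exact: (proj2 (L1Z_eq K _ _ h01)).
  by rewrite (horiz_false0 Hy.1); apply: L1B0.
exists (slice w set0); split; first exact: supp1_slice Hw.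
rewrite /f2; have -> : horiz true K y = f3 g - z by rewrite e addrK.
rewrite sliceD sliceN ez {1}(f3_slice Hw) vert_f3 !slice_f3 opprK.
by rewrite addrC addKr.
Qed.

Lemma surj3 t (y : V2) : L2Z true K (-1) t y ->
  exists g, HZ K t g /\ L2B true K (-1) t (f3 g - y).
Proof.
move=> [[Hs Hv] _]; exists (slice y set0); split; last by rewrite -(f3_slice Hs) subrr; apply: L2B0.
split; first exact: supp1_slice Hs.
rewrite {1}(f3_slice Hs) vert_f3 in Hv.
have := f_equal (fun f : V2 => slice f set0) Hv; rewrite /= slice_f3 slice0 => /eqP.
by rewrite oppr_eq0 => /eqP.
Qed.

Lemma part2 (n : nat) :
     exists (f1 : V2 -> V2) (f2' : V2 -> V1) (f3' : V1 -> V2),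
       sq_hom (L2Z true K 0 n) (L2B true K 0 n) (L2Z false K 0 n) (L2B false K 0 n) f1 /\
           sq_hom (L2Z false K 0 n) (L2B false K 0 n) (HZ K n) (HB K n) f2' /\
           sq_hom (HZ K n) (HB K n) (L2Z true K (-1) n) (L2B true K (-1) n) f3' /\
           sq_inj (L2Z true K 0 n) (L2B true K 0 n) (L2B false K 0 n) f1 /\
           sq_exact (L2Z true K 0 n) (L2Z false K 0 n) (L2B false K 0 n) (HB K n) f1 f2' /\
           sq_exact (L2Z false K 0 n) (HZ K n) (HB K n) (L2B true K (-1) n) f2' f3' /\
           sq_surj (HZ K n) (L2Z true K (-1) n) (L2B true K (-1) n) f3'.
Proof.
exists (fun x => x), (f2 K), (@f3 S G).
split; first split.
- exact: L2Z_f1.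
- by move=> x y _ _; rewrite subDD; apply: L2B0.
- by move=> x /(proj2 (L2B_eq _ _ _ (lexx 0))).
split; first split.
- exact: HZ_f2.
- by move=> x y _ _; rewrite f2D subDD; apply: HB0.
- exact: HB_f2.
split; first split.
- exact: Z_f3.
- by move=> x y _ _; rewrite f3D subDD; apply: L2B0.
- exact: B_f3.
split; first by move=> x _ /(proj1 (L2B_eq _ _ _ (lexx 0))).
split; first by split; [exact: ex12a | exact: ex12b].
split; first by split; [exact: ex23a | exact: ex23b].
exact: surj3.
Qed.

End Part2b.

Theorem theorem4 (S : finType) (G : zmodType) (K : {set {set S}})
  (HK : simplicial_complex K) :
  (forall red : bool,
     exists Phi Psi : int -> int -> {ffun {set S} * {set S} -> G} -> {ffun {set S} * {set S} -> G},
       (forall s t : int,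
          sq_iso (L1Z red K s (s + t + 1)) (L1B red K s (s + t + 1))
                 (AZ red K s t) (AB red K s t) (Phi s t) (Psi s t)) /\
       (forall (s t : int) (x : {ffun {set S} * {set S} -> G}), L1Z red K s (s + t + 1) x ->
          AB red K (s - 1) (t + 1)
             (Phi (s - 1) (t + 1) (horiz red K x) - dA red (Phi s t x)))) /\
  (forall n : nat,
     exists (f1 : {ffun {set S} * {set S} -> G} -> {ffun {set S} * {set S} -> G}) (f2 : {ffun {set S} * {set S} -> G} -> {ffun {set S} -> G})
            (f3 : {ffun {set S} -> G} -> {ffun {set S} * {set S} -> G}),
       sq_hom (L2Z true K 0 n) (L2B true K 0 n) (L2Z false K 0 n) (L2B false K 0 n) f1 /\
           sq_hom (L2Z false K 0 n) (L2B false K 0 n) (HZ K n) (HB K n) f2 /\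
           sq_hom (HZ K n) (HB K n) (L2Z true K (-1) n) (L2B true K (-1) n) f3 /\
           sq_inj (L2Z true K 0 n) (L2B true K 0 n) (L2B false K 0 n) f1 /\
           sq_exact (L2Z true K 0 n) (L2Z false K 0 n) (L2B false K 0 n) (HB K n) f1 f2 /\
           sq_exact (L2Z false K 0 n) (HZ K n) (HB K n) (L2B true K (-1) n) f2 f3 /\
           sq_surj (HZ K n) (L2Z true K (-1) n) (L2B true K (-1) n) f3) /\
  (forall s n : int, 0 < s ->
     (forall x : {ffun {set S} * {set S} -> G}, L2Z false K s n x <-> L2Z true K s n x) /\
     (forall x : {ffun {set S} * {set S} -> G}, L2B false K s n x <-> L2B true K s n x)).
Proof.
split; first by move=> red; apply: part1.
split; first by move=> n; apply: part2.
move=> s n hs; split => x; first exact: L2Z_eq.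
by apply: L2B_eq; apply: ltW.
Qed.
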